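(* Let $P$ be a path producible by a tile assembly system $\mathcal T=(T,\sigma,1)$ such that the last glue of $P$ (the glue between $P_{|P|-2}$ and $P_{|P|-1}$) is visible from the north. Let $i,j\in\{0,1,\dots,|P|-2\}$. If the glues $\mathrm{glue}_P(i)$ and $\mathrm{glue}_P(j)$ are both visible from the south, $\mathrm{glue}_P(i)$ points east and $x_{P_i}<x_{P_j}$, then $i<j$ and $\mathrm{glue}_P(j)$ points east. Symmetrically, if both are visible from the south, $\mathrm{glue}_P(i)$ points west and $x_{P_i}>x_{P_j}$, then $i<j$ and $\mathrm{glue}_P(j)$ points west.
   Context: Abstract Tile Assembly Model (aTAM) at temperature 1: $T$ is a finite set of tile types (unit squares with a glue type and nonnegative strength on each side); a tile is a pair $((x,y),t)\in\mathbb Z^2\times T$; two adjacent tiles interact if their abutting glues have equal type and strength $\ge1$; a tile assembly system $\mathcal T=(T,\sigma,1)$ has a finite connected seed assembly $\sigma$, and producible assemblies are grown from $\sigma$ by repeatedly adding a single tile that interacts with at least one existing tile. A path is a sequence $P=P_0P_1\dots$ of tiles with pairwise distinct positions, consecutive ones adjacent and interacting; $x_{P_i},y_{P_i}$ are the coordinates of $P_i$. $P$ is producible if its tiles avoid the positions of $\sigma$, $\sigma\cup\{P_0,P_1,\dots\}$ is producible and $P_0$ interacts with a tile of $\sigma$. For $0\le i\le |P|-2$, $\mathrm{glue}_P(i)$ is the glue shared by $P_i$ and $P_{i+1}$; its type is the common glue type, its position is the midpoint of the segment from $\mathrm{pos}(P_i)$ to $\mathrm{pos}(P_{i+1})$;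 it points east, west, north or south according as $\mathrm{pos}(P_{i+1})-\mathrm{pos}(P_i)$ is $(1,0),(-1,0),(0,1),(0,-1)$. The embedding $\mathrm{emb}(P)$ is the polygonal curve through $\mathrm{pos}(P_0),\mathrm{pos}(P_1),\dots$ in order. A glue pointing east or west is visible from the south (resp. north) if the vertical ray starting at its position and going down (resp. up) intersects neither $\mathrm{emb}(P)$ nor $\sigma$ (i.e., neither a tile position of $\sigma$ nor a unit segment joining two adjacent tile positions of $\sigma$). *)

(* Defs.v *)
From Stdlib Require Import ZArith Reals List Permutation Relations.
Import ListNotations.

(** A glue is a pair (glue type, strength). *)
Definition glue : Type := (nat * nat)%type.
Definition glue_strength (g : glue) : nat := snd g.

Record tiletype : Type := TileType {
  gN : glue; gE : glue; gS : glue; gW : glue }.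

Definition pos : Type := (Z * Z)%type.
Definition tile : Type := (pos * tiletype)%type.

Definition tpos (a : tile) : pos := fst a.
Definition ttype (a : tile) : tiletype := snd a.

Definition adjacent (p q : pos) : Prop :=
  (fst q = (fst p + 1)%Z /\ snd q = snd p) \/
  (fst q = (fst p - 1)%Z /\ snd q = snd p) \/
  (fst q = fst p /\ snd q = (snd p + 1)%Z) \/
  (fst q = fst p /\ snd q = (snd p - 1)%Z).

Definition glues_match (g h : glue) : Prop := g = h /\ (1 <= glue_strength g)%nat.

Definition interact (a b : tile) : Prop :=
  let p := tpos a in let q := tpos b in
  let t := ttype a in let u := ttype b in
  (fst q = (fst p + 1)%Z /\ snd q = snd p /\ glues_match (gE t) (gW u)) \/
  (fst q = (fst p - 1)%Z /\ snd q = snd p /\ glues_match (gW t) (gE u)) \/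
  (fst q = fst p /\ snd q = (snd p + 1)%Z /\ glues_match (gN t) (gS u)) \/
  (fst q = fst p /\ snd q = (snd p - 1)%Z /\ glues_match (gS t) (gN u)).

Definition seed_ok (sigma : list tile) : Prop :=
  sigma <> [] /\ NoDup (map tpos sigma) /\
  forall a b, In a sigma -> In b sigma ->
    clos_refl_trans tile (fun u v => In u sigma /\ In v sigma /\ interact u v) a b.

(** Assemblies grown from the seed by single-tile attachments (the list
    records the assembly; the most recently attached tile is at the head). *)
Inductive grown (T : list tiletype) (sigma : list tile) : list tile -> Prop :=
| grown_seed : grown T sigma sigma
| grown_step : forall (A : list tile) (t : tile),
    grown T sigma A ->
    In (ttype t) T ->
    ~ In (tpos t) (map tpos A) ->
    (exists u, In u A /\ interact u t) ->
    grown T sigma (t :: A).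

Definition producible (T : list tiletype) (sigma : list tile) (A : list tile) : Prop :=
  exists L, grown T sigma L /\ Permutation L A.

Definition dummy_tile : tile := ((0%Z, 0%Z), TileType (0,0) (0,0) (0,0) (0,0)).
Definition tile_at (P : list tile) (i : nat) : tile := nth i P dummy_tile.
Definition pos_at (P : list tile) (i : nat) : pos := tpos (tile_at P i).
Definition x_at (P : list tile) (i : nat) : Z := fst (pos_at P i).
Definition y_at (P : list tile) (i : nat) : Z := snd (pos_at P i).

Definition is_path (P : list tile) : Prop :=
  NoDup (map tpos P) /\
  forall i, (S i < length P)%nat -> interact (tile_at P i) (tile_at P (S i)).

Definition producible_path (T : list tiletype) (sigma : list tile) (P : list tile) : Prop :=
  is_path P /\ P <> [] /\
  (forall t, In t P -> ~ In (tpos t) (map tpos sigma)) /\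
  producible T sigma (sigma ++ P) /\
  (exists u, In u sigma /\ interact u (tile_at P 0)).

(** Directions of glue_P(i) (between P_i and P_{i+1}). *)
Definition points_east (P : list tile) (i : nat) : Prop :=
  x_at P (S i) = (x_at P i + 1)%Z /\ y_at P (S i) = y_at P i.
Definition points_west (P : list tile) (i : nat) : Prop :=
  x_at P (S i) = (x_at P i - 1)%Z /\ y_at P (S i) = y_at P i.

Local Open Scope R_scope.

Definition point : Type := (R * R)%type.
Definition Rpos (p : pos) : point := (IZR (fst p), IZR (snd p)).

Definition on_segment (a b z : point) : Prop :=
  exists t : R, 0 <= t <= 1 /\
    fst z = fst a + t * (fst b - fst a) /\
    snd z = snd a + t * (snd b - snd a).

(** z lies on emb(P), the polygonal curve through pos(P_0), pos(P_1), ... *)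
Definition in_emb (P : list tile) (z : point) : Prop :=
  (exists k, (S k < length P)%nat /\
     on_segment (Rpos (pos_at P k)) (Rpos (pos_at P (S k))) z) \/
  (length P = 1%nat /\ z = Rpos (pos_at P 0)).

Definition in_seed (sigma : list tile) (z : point) : Prop :=
  (exists u, In u sigma /\ z = Rpos (tpos u)) \/
  (exists u v, In u sigma /\ In v sigma /\ adjacent (tpos u) (tpos v) /\
     on_segment (Rpos (tpos u)) (Rpos (tpos v)) z).

Definition glue_pos (P : list tile) (i : nat) : point :=
  ((fst (Rpos (pos_at P i)) + fst (Rpos (pos_at P (S i)))) / 2,
   (snd (Rpos (pos_at P i)) + snd (Rpos (pos_at P (S i)))) / 2).

(** glue_P(i) (pointing east or west) is visible from the south: the vertical
    ray starting at its position and going down (the starting point itself,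
    which lies on emb(P), excluded) meets neither emb(P) nor sigma. *)
Definition visible_from_south (sigma : list tile) (P : list tile) (i : nat) : Prop :=
  (points_east P i \/ points_west P i) /\
  forall s : R, 0 < s ->
    let z := (fst (glue_pos P i), snd (glue_pos P i) - s) in
    ~ in_emb P z /\ ~ in_seed sigma z.

Definition visible_from_north (sigma : list tile) (P : list tile) (i : nat) : Prop :=
  (points_east P i \/ points_west P i) /\
  forall s : R, 0 < s ->
    let z := (fst (glue_pos P i), snd (glue_pos P i) + s) in
    ~ in_emb P z /\ ~ in_seed sigma z.

(* Main.v *)
Require Import Defs.
From Stdlib Require Import ZArith Reals List Lia Lra Bool Arith.

Open Scope Z_scope.

Definition unitZ (a b : Z*Z) : Prop :=
  (fst b = fst a + 1 /\ snd b = snd a) \/ (fst b = fst a - 1 /\ snd b = snd a) \/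
  (fst b = fst a /\ snd b = snd a + 1) \/ (fst b = fst a /\ snd b = snd a - 1).

Definition chi (q a b : Z*Z) : bool :=
  (snd a =? snd b) && (snd q <? snd a) &&
  (((fst a =? fst q) && (fst b =? fst q + 1)) || ((fst b =? fst q) && (fst a =? fst q + 1))).

Section Core.
Variable g : nat -> Z*Z.

Fixpoint cntr (q : Z*Z) (lo len : nat) : bool :=
  match len with
  | O => false
  | S l => xorb (chi q (g lo) (g (S lo))) (cntr q (S lo) l)
  end.

Ltac bsplit := repeat match goal with
  | |- context [Z.eqb ?a ?b] => destruct (Z.eqb_spec a b)
  | |- context [Z.ltb ?a ?b] => destruct (Z.ltb_spec a b)
  end; simpl; try reflexivity; try (exfalso; lia).

Definition inR (x y : Z) (p : Z*Z) : bool := (fst p =? x + 1) && (y <? snd p).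

Lemma chi_h x y a b : unitZ a b ->
  ~ (fst a = x /\ snd a = y) -> ~ (fst a = x+1 /\ snd a = y) ->
  ~ (fst b = x /\ snd b = y) -> ~ (fst b = x+1 /\ snd b = y) ->
  xorb (chi (x,y) a b) (chi (x+1,y) a b) = xorb (inR x y a) (inR x y b).
Proof.
  destruct a as [ax ay], b as [bx by0]; unfold chi, inR, unitZ; simpl.
  intros [[-> ->]|[[-> ->]|[[-> ->]|[-> ->]]]] H1 H2 H3 H4; bsplit.
Qed.

Lemma chi_v x y a b : unitZ a b ->
  ~ (fst a = x /\ snd a = y+1) -> ~ (fst b = x /\ snd b = y+1) ->
  chi (x,y) a b = chi (x,y+1) a b.
Proof.
  destruct a as [ax ay], b as [bx by0]; unfold chi, unitZ; simpl.
  intros [[-> ->]|[[-> ->]|[[-> ->]|[-> ->]]]] H1 H2; bsplit.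
Qed.

Lemma chi_row x Y a b : unitZ a b -> Y < snd a -> Y < snd b ->
  chi (x,Y) a b = xorb (x <? fst a) (x <? fst b).
Proof.
  destruct a as [ax ay], b as [bx by0]; unfold chi, unitZ; simpl.
  intros [[-> ->]|[[-> ->]|[[-> ->]|[-> ->]]]] H1 H2; bsplit.
Qed.

Lemma chi_none q a b : ~ (fst a = fst q /\ snd a > snd q) ->
  ~ (fst b = fst q /\ snd b > snd q) -> chi q a b = false.
Proof.
  destruct a as [ax ay], b as [bx by0], q as [qx qy]; unfold chi; simpl.
  intros H1 H2; bsplit.
Qed.

Definition units (lo len : nat) := forall k, (k < len)%nat -> unitZ (g (lo + k)) (g (S (lo + k))).
Definition avoid (p : Z*Z) (lo len : nat) := forall k, (k <= len)%nat -> g (lo + k) <> p.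

Lemma cnt_h x y lo len : units lo len -> avoid (x,y) lo len -> avoid (x+1,y) lo len ->
  xorb (cntr (x,y) lo len) (cntr (x+1,y) lo len) = xorb (inR x y (g lo)) (inR x y (g (lo + len)%nat)).
Proof.
  revert lo; induction len as [|l IH]; intros lo U A1 A2; simpl.
  - rewrite Nat.add_0_r. destruct (inR x y (g lo)); reflexivity.
  - assert (E: (forall p, avoid p lo (S l) -> avoid p (S lo) l)).
    { intros p A k Hk. replace (S lo + k)%nat with (lo + S k)%nat by lia. apply A; lia. }
    assert (U': units (S lo) l).
    { intros k Hk. replace (S lo + k)%nat with (lo + S k)%nat by lia. apply U; lia. }
    pose proof (IH (S lo) U' (E _ A1) (E _ A2)) as IH'.
    replace (S lo + l)%nat with (lo + S l)%nat in IH' by lia.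
    assert (Hc := chi_h x y (g lo) (g (S lo))).
    assert (Hu := U 0%nat ltac:(lia)). rewrite Nat.add_0_r in Hu.
    assert (N: forall p q, g p <> q -> ~ (fst (g p) = fst q /\ snd (g p) = snd q)).
    { intros p0 [q1 q2] H [Ha Hb]. apply H. destruct (g p0); simpl in *; subst; reflexivity. }
    pose proof (A1 0%nat ltac:(lia)) as a0. pose proof (A2 0%nat ltac:(lia)) as a0'.
    pose proof (A1 1%nat ltac:(lia)) as a1. pose proof (A2 1%nat ltac:(lia)) as a1'.
    rewrite Nat.add_0_r in a0, a0'. replace (lo+1)%nat with (S lo) in a1, a1' by lia.
    specialize (Hc Hu (N _ _ a0) (N _ _ a0') (N _ _ a1) (N _ _ a1')).
    destruct (chi (x,y) (g lo) (g (S lo))), (chi (x+1,y) (g lo) (g (S lo))),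
      (cntr (x,y) (S lo) l), (cntr (x+1,y) (S lo) l), (inR x y (g lo)), (inR x y (g (S lo))),
      (inR x y (g (lo + S l)%nat)); simpl in *; congruence.
Qed.

Lemma cnt_v x y lo len : units lo len -> avoid (x,y+1) lo len ->
  cntr (x,y) lo len = cntr (x,y+1) lo len.
Proof.
  revert lo; induction len as [|l IH]; intros lo U A; simpl; auto.
  assert (U': units (S lo) l).
  { intros k Hk. replace (S lo + k)%nat with (lo + S k)%nat by lia. apply U; lia. }
  assert (A': avoid (x,y+1) (S lo) l).
  { intros k Hk. replace (S lo + k)%nat with (lo + S k)%nat by lia. apply A; lia. }
  rewrite (IH _ U' A').
  assert (N: forall p q, g p <> q -> ~ (fst (g p) = fst q /\ snd (g p) = snd q)).
  { intros p0 [q1 q2] H [Ha Hb]. apply H. destruct (g p0); simpl in *; subst; reflexivity. }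
  pose proof (A 0%nat ltac:(lia)) as a0. pose proof (A 1%nat ltac:(lia)) as a1.
  rewrite Nat.add_0_r in a0. replace (lo+1)%nat with (S lo) in a1 by lia.
  assert (Hu := U 0%nat ltac:(lia)). rewrite Nat.add_0_r in Hu.
  rewrite (chi_v x y _ _ Hu (N _ _ a0) (N _ _ a1)). reflexivity.
Qed.

Lemma cnt_row x Y lo len : units lo len -> (forall k, (k <= len)%nat -> Y < snd (g (lo + k))) ->
  cntr (x,Y) lo len = xorb (x <? fst (g lo)) (x <? fst (g (lo + len)%nat)).
Proof.
  revert lo; induction len as [|l IH]; intros lo U A; simpl.
  - rewrite Nat.add_0_r. destruct (x <? fst (g lo)); reflexivity.
  - assert (U': units (S lo) l).
    { intros k Hk. replace (S lo + k)%nat with (lo + S k)%nat by lia. apply U; lia. }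
    assert (A': forall k, (k <= l)%nat -> Y < snd (g (S lo + k))).
    { intros k Hk. replace (S lo + k)%nat with (lo + S k)%nat by lia. apply A; lia. }
    rewrite (IH _ U' A'). replace (S lo + l)%nat with (lo + S l)%nat by lia.
    pose proof (A 0%nat ltac:(lia)) as a0. pose proof (A 1%nat ltac:(lia)) as a1.
    rewrite Nat.add_0_r in a0. replace (lo+1)%nat with (S lo) in a1 by lia.
    assert (Hu := U 0%nat ltac:(lia)). rewrite Nat.add_0_r in Hu.
    rewrite (chi_row x Y _ _ Hu a0 a1).
    destruct (x <? fst (g lo)), (x <? fst (g (S lo))), (x <? fst (g (lo + S l)%nat)); reflexivity.
Qed.

Lemma cnt_none q lo len : (forall k, (k <= len)%nat -> ~ (fst (g (lo+k)) = fst q /\ snd (g (lo+k)) > snd q)) ->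
  cntr q lo len = false.
Proof.
  revert lo; induction len as [|l IH]; intros lo A; simpl; auto.
  rewrite chi_none.
  - rewrite IH; auto. intros k Hk. replace (S lo + k)%nat with (lo + S k)%nat by lia. apply A; lia.
  - pose proof (A 0%nat ltac:(lia)) as a0. rewrite Nat.add_0_r in a0. exact a0.
  - pose proof (A 1%nat ltac:(lia)) as a0. replace (lo+1)%nat with (S lo) in a0 by lia. exact a0.
Qed.

Definition onray (M p : Z*Z) : Prop := fst p = fst M /\ snd p <= snd M.

Lemma step_inv lo len q q' : units lo len -> unitZ q q' -> avoid q lo len -> avoid q' lo len ->
  ~ onray (g lo) q -> ~ onray (g lo) q' -> ~ onray (g (lo+len)%nat) q -> ~ onray (g (lo+len)%nat) q' ->
  cntr q lo len = cntr q' lo len.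
Proof.
  intros U Hu A A' R1 R1' R2 R2'.
  destruct q as [x y], q' as [x' y']; unfold unitZ in Hu; simpl in Hu.
  destruct Hu as [[-> ->]|[[-> ->]|[[-> ->]|[-> ->]]]].
  - pose proof (cnt_h x y lo len U A A') as H.
    assert (inR x y (g lo) = false).
    { unfold inR. destruct (Z.eqb_spec (fst (g lo)) (x+1)), (Z.ltb_spec y (snd (g lo))); auto.
      exfalso; apply R1'; unfold onray; simpl; lia. }
    assert (inR x y (g (lo+len)%nat) = false).
    { unfold inR. destruct (Z.eqb_spec (fst (g (lo+len)%nat)) (x+1)), (Z.ltb_spec y (snd (g (lo+len)%nat))); auto.
      exfalso; apply R2'; unfold onray; simpl; lia. }
    rewrite H0, H1 in H. destruct (cntr (x,y) lo len), (cntr (x+1,y) lo len); simpl in H; congruence.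
  - remember (x - 1) as z eqn:Ez. assert (x = z + 1) by lia. subst x. clear Ez.
    pose proof (cnt_h z y lo len U A' A) as H.
    assert (inR z y (g lo) = false).
    { unfold inR. destruct (Z.eqb_spec (fst (g lo)) (z+1)), (Z.ltb_spec y (snd (g lo))); auto.
      exfalso; apply R1; unfold onray; simpl; lia. }
    assert (inR z y (g (lo+len)%nat) = false).
    { unfold inR. destruct (Z.eqb_spec (fst (g (lo+len)%nat)) (z+1)), (Z.ltb_spec y (snd (g (lo+len)%nat))); auto.
      exfalso; apply R2; unfold onray; simpl; lia. }
    rewrite H0, H1 in H. destruct (cntr (z,y) lo len), (cntr (z+1,y) lo len); simpl in H; congruence.
  - apply cnt_v; auto.
  - remember (y - 1) as z eqn:Ez. assert (y = z + 1) by lia. subst y. clear Ez.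
    symmetry; apply cnt_v; auto.
Qed.


Lemma exY lo n : exists Y, forall k, (k <= n)%nat -> Y < snd (g (lo + k)).
Proof.
  induction n as [|n [Y HY]].
  - exists (snd (g lo) - 1). intros k Hk. assert (k = 0%nat) by lia. subst. rewrite Nat.add_0_r. lia.
  - exists (Z.min Y (snd (g (lo + S n)%nat) - 1)). intros k Hk.
    destruct (Nat.eq_dec k (S n)) as [->|Hn]. lia. specialize (HY k ltac:(lia)). lia.
Qed.

Lemma between lo len (sg : Z) : units lo len ->
  (forall k t, (k <= len)%nat -> 0 < t -> g (lo + k) <> (fst (g lo), snd (g lo) - t)) ->
  (forall k t, (k <= len)%nat -> 0 < t -> g (lo + k) <> (fst (g (lo+len)%nat), snd (g (lo+len)%nat) - t)) ->
  ((sg = 1 /\ fst (g lo) > fst (g (lo+len)%nat) /\ fst (g lo) <> fst (g (lo+len)%nat) + 1) \/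
   (sg = -1 /\ fst (g lo) < fst (g (lo+len)%nat))) ->
  avoid (fst (g (lo+len)%nat) + sg, snd (g (lo+len)%nat)) lo len ->
  avoid (fst (g (lo+len)%nat) + sg, snd (g (lo+len)%nat) - 1) lo len ->
  cntr (fst (g (lo+len)%nat) + sg, snd (g (lo+len)%nat)) lo len = true.
Proof.
  intros U R1 R2 Hs Av Av1.
  set (mx := fst (g (lo+len)%nat)) in *. set (my := snd (g (lo+len)%nat)) in *.
  set (sx := fst (g lo)) in *.
  destruct (exY lo len) as [Y HY].
  pose proof (cnt_row mx Y lo len U HY) as Hrow. fold sx in Hrow. fold mx in Hrow.
  rewrite Z.ltb_irrefl, xorb_false_r in Hrow.
  assert (HYm : Y < my) by (apply (HY len); lia).
  assert (Col : forall d : nat, Y + Z.of_nat d <= my - 1 -> cntr (mx, Y + Z.of_nat d) lo len = cntr (mx, Y) lo len).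
  { induction d as [|d IH]; intros Hd.
    - simpl. rewrite Z.add_0_r. reflexivity.
    - rewrite Nat2Z.inj_succ. rewrite <- IH by lia.
      replace (Y + Z.succ (Z.of_nat d)) with (Y + Z.of_nat d + 1) by lia.
      symmetry. apply cnt_v; auto. intros k Hk E.
      apply (R2 k (my - (Y + Z.of_nat d + 1)) Hk ltac:(lia)). rewrite E. fold mx my. f_equal. lia. }
  assert (Hc : cntr (mx, my - 1) lo len = (mx <? sx)).
  { rewrite <- Hrow. specialize (Col (Z.to_nat (my - 1 - Y)) ltac:(lia)).
    rewrite Z2Nat.id in Col by lia. replace (Y + (my - 1 - Y)) with (my - 1) in Col by lia. exact Col. }
  assert (Av0 : avoid (mx, my - 1) lo len).
  { intros k Hk E. apply (R2 k 1 Hk ltac:(lia)). rewrite E. reflexivity. }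
  destruct Hs as [[-> [Hgt Hne]] | [-> Hlt]].
  - assert (E := cnt_v (mx+1) (my-1) lo len U ltac:(replace (my - 1 + 1) with my by lia; exact Av)).
    replace (my - 1 + 1) with my in E by lia. rewrite <- E.
    pose proof (cnt_h mx (my-1) lo len U Av0 Av1) as H.
    unfold inR in H. fold sx mx in H. replace (lo + len)%nat with (lo+len)%nat in H by reflexivity.
    fold mx in H.
    rewrite (proj2 (Z.eqb_neq sx (mx+1)) Hne), (proj2 (Z.eqb_neq mx (mx+1)) ltac:(lia)) in H.
    simpl in H. rewrite Hc in H. replace (mx <? sx) with true in H by (symmetry; apply Z.ltb_lt; lia).
    destruct (cntr (mx + 1, my - 1) lo len); simpl in H; congruence.
  - assert (E := cnt_v (mx + -1) (my-1) lo len U ltac:(replace (my - 1 + 1) with my by lia; exact Av)).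
    replace (my - 1 + 1) with my in E by lia. rewrite <- E.
    replace (mx + -1) with (mx - 1) in * by lia.
    assert (Av0' : avoid (mx - 1 + 1, my - 1) lo len) by (replace (mx - 1 + 1) with mx by lia; exact Av0).
    pose proof (cnt_h (mx-1) (my-1) lo len U Av1 Av0') as H.
    unfold inR in H. fold sx mx in H. fold my in H.
    replace (mx - 1 + 1) with mx in H by lia.
    rewrite (proj2 (Z.eqb_neq sx mx) ltac:(lia)), Z.eqb_refl in H.
    replace (my - 1 <? my) with true in H by (symmetry; apply Z.ltb_lt; lia).
    rewrite Hc in H. replace (mx <? sx) with false in H by (symmetry; apply Z.ltb_ge; lia).
    destruct (cntr (mx - 1, my - 1) lo len); simpl in H; congruence.
Qed.

Lemma walk_inv lo len (w : nat -> Z*Z) (m : nat) : units lo len ->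
  (forall n, (n < m)%nat -> unitZ (w n) (w (S n))) ->
  (forall n, (n <= m)%nat -> avoid (w n) lo len /\ ~ onray (g lo) (w n) /\ ~ onray (g (lo+len)%nat) (w n)) ->
  cntr (w 0%nat) lo len = cntr (w m) lo len.
Proof.
  intros U Hu Ha. induction m as [|m IH]; auto.
  rewrite IH by (intros; auto with arith).
  destruct (Ha m ltac:(lia)) as [A1 [B1 C1]]. destruct (Ha (S m) ltac:(lia)) as [A2 [B2 C2]].
  apply step_inv; auto.
Qed.

End Core.
Close Scope Z_scope.
Open Scope Z_scope.

Lemma par (n : nat) : exists k, (n = 2*k \/ n = 2*k+1)%nat.
Proof. induction n as [|n [k [->| ->]]]. exists 0%nat; lia. exists k; lia. exists (S k); lia. Qed.

Section P.
Variable P : list tile.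
Hypothesis Hpath : is_path P.
Hypothesis Hlen : (2 <= length P)%nat.

Definition X k := x_at P k.
Definition Y k := y_at P k.
Definition L := (length P - 1)%nat.

Definition DP (n : nat) : Z*Z :=
  if Nat.even n then (2 * X (Nat.div2 n), 2 * Y (Nat.div2 n))
  else (X (Nat.div2 n) + X (S (Nat.div2 n)), Y (Nat.div2 n) + Y (S (Nat.div2 n))).

Lemma DP_e k : DP (2*k) = (2 * X k, 2 * Y k).
Proof. unfold DP. rewrite Nat.even_even, Nat.div2_double. reflexivity. Qed.
Lemma DP_o k : DP (2*k+1) = (X k + X (S k), Y k + Y (S k)).
Proof. unfold DP. rewrite Nat.even_odd, Nat.div2_odd'. reflexivity. Qed.

Definition ustep k := (X (S k) = X k + 1 /\ Y (S k) = Y k) \/ (X (S k) = X k - 1 /\ Y (S k) = Y k) \/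
  (X (S k) = X k /\ Y (S k) = Y k + 1) \/ (X (S k) = X k /\ Y (S k) = Y k - 1).

Lemma step_ok k : (k < L)%nat -> ustep k.
Proof.
  intros Hk. destruct Hpath as [_ H]. specialize (H k ltac:(unfold L in Hk; lia)).
  unfold interact in H. unfold ustep, X, Y, x_at, y_at, pos_at.
  destruct H as [[A [B _]]|[[A [B _]]|[[A [B _]]|[A [B _]]]]]; lia.
Qed.

Lemma pos_inj k l : (k <= L)%nat -> (l <= L)%nat -> X k = X l -> Y k = Y l -> k = l.
Proof.
  intros Hk Hl Hx Hy. destruct Hpath as [ND _].
  apply (proj1 (NoDup_nth (map tpos P) (tpos dummy_tile)) ND); rewrite ?length_map; try (unfold L in *; lia).
  rewrite !map_nth. unfold X, Y, x_at, y_at, pos_at, tile_at in *.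
  destruct (tpos (nth k P dummy_tile)), (tpos (nth l P dummy_tile)); simpl in *; subst; reflexivity.
Qed.

Lemma DP_units n : (n < 2*L)%nat -> unitZ (DP n) (DP (S n)).
Proof.
  intros Hn. destruct (par n) as [k [->| ->]].
  - replace (S (2*k)) with (2*k+1)%nat by lia. rewrite DP_e, DP_o.
    pose proof (step_ok k ltac:(lia)) as H. unfold ustep, unitZ in *; cbn [fst snd]. lia.
  - replace (S (2*k+1)) with (2*(S k))%nat by lia. rewrite DP_e, DP_o.
    pose proof (step_ok k ltac:(lia)) as H. unfold ustep, unitZ in *; cbn [fst snd]. lia.
Qed.

Lemma DP_inj n m : (n <= 2*L)%nat -> (m <= 2*L)%nat -> DP n = DP m -> n = m.
Proof.
  intros Hn Hm E.
  destruct (par n) as [k [->| ->]], (par m) as [l [->| ->]];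
    rewrite ?DP_e, ?DP_o in E; pose proof (f_equal fst E) as E1; pose proof (f_equal snd E) as E2; cbn [fst snd] in E1, E2; clear E.
  - rewrite (pos_inj k l) by lia; reflexivity.
  - pose proof (step_ok l ltac:(lia)) as H. unfold ustep in H. lia.
  - pose proof (step_ok k ltac:(lia)) as H. unfold ustep in H. lia.
  - pose proof (step_ok k ltac:(lia)) as H. pose proof (step_ok l ltac:(lia)) as H'.
    assert (C: (X k = X l /\ Y k = Y l) \/ (X k = X (S l) /\ Y k = Y (S l))) by (unfold ustep in *; lia).
    destruct C as [[C1 C2]|[C1 C2]].
    + rewrite (pos_inj k l) by lia; reflexivity.
    + pose proof (pos_inj k (S l) ltac:(lia) ltac:(lia) C1 C2). subst k.
      assert (X (S (S l)) = X l /\ Y (S (S l)) = Y l) by (unfold ustep in *; lia).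
      pose proof (pos_inj (S (S l)) l ltac:(lia) ltac:(lia) (proj1 H0) (proj2 H0)). lia.
Qed.

Lemma VOFF m l d : (m <= 2*L)%nat -> (l <= L)%nat -> (d = 1 \/ d = -1) ->
  DP m = (2 * X l, 2 * Y l + d) ->
  exists k, m = (2*k+1)%nat /\ (k = l \/ S k = l) /\ X (S k) = X k.
Proof.
  intros Hm Hl Hd E. destruct (par m) as [k [->| ->]]; rewrite ?DP_e, ?DP_o in E; pose proof (f_equal fst E) as E1; pose proof (f_equal snd E) as E2; cbn [fst snd] in E1, E2; clear E.
  - lia.
  - exists k. pose proof (step_ok k ltac:(lia)) as H. unfold ustep in H.
    assert (Hv : X (S k) = X k) by lia. split; [reflexivity|split; [|exact Hv]].
    assert (C: (X k = X l /\ Y k = Y l) \/ (X (S k) = X l /\ Y (S k) = Y l)) by lia.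
    destruct C as [[C1 C2]|[C1 C2]].
    + left. apply pos_inj; lia.
    + right. apply pos_inj; lia.
Qed.


Lemma Rpos_fst k : fst (Rpos (pos_at P k)) = IZR (X k).
Proof. reflexivity. Qed.
Lemma Rpos_snd k : snd (Rpos (pos_at P k)) = IZR (Y k).
Proof. reflexivity. Qed.

Lemma DP_emb n : (n <= 2*L)%nat -> in_emb P (IZR (fst (DP n)) / 2, IZR (snd (DP n)) / 2)%R.
Proof.
  intros Hn. left. destruct (par n) as [k [->| ->]].
  - rewrite DP_e. cbn [fst snd]. rewrite !mult_IZR.
    destruct (Nat.eq_dec k L) as [->|Hk].
    + exists (L - 1)%nat. split. unfold L in *; lia.
      replace (S (L - 1)) with L by (unfold L in *; lia).
      exists 1%R. split. lra. rewrite !Rpos_fst, !Rpos_snd. cbn [fst snd]. split; lra.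
    + exists k. split. unfold L in *; lia.
      exists 0%R. split. lra. rewrite !Rpos_fst, !Rpos_snd. cbn [fst snd]. split; lra.
  - rewrite DP_o. cbn [fst snd]. rewrite !plus_IZR.
    exists k. split. unfold L in *; lia.
    exists (1/2)%R. split. lra. rewrite !Rpos_fst, !Rpos_snd. cbn [fst snd]. split; lra.
Qed.

Lemma VS sigma k n t : visible_from_south sigma P k -> (k < L)%nat -> (n <= 2*L)%nat -> 0 < t ->
  DP n <> (fst (DP (2*k+1)), snd (DP (2*k+1)) - t).
Proof.
  intros [_ H] Hk Hn Ht E.
  assert (Hs : (0 < IZR t / 2)%R) by (apply IZR_lt in Ht; lra).
  destruct (H _ Hs) as [H1 _]. apply H1.
  pose proof (DP_emb n Hn) as He. rewrite E, DP_o in He. cbn [fst snd] in He.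
  replace (fst (glue_pos P k), (snd (glue_pos P k) - IZR t / 2)%R) with
    ((IZR (X k + X (S k) ) / 2)%R, (IZR (Y k + Y (S k) - t) / 2)%R); [exact He|].
  unfold glue_pos. rewrite !Rpos_fst, !Rpos_snd. cbn [fst snd].
  rewrite !minus_IZR, !plus_IZR. f_equal; lra.
Qed.

Lemma VN sigma k n t : visible_from_north sigma P k -> (k < L)%nat -> (n <= 2*L)%nat -> 0 < t ->
  DP n <> (fst (DP (2*k+1)), snd (DP (2*k+1)) + t).
Proof.
  intros [_ H] Hk Hn Ht E.
  assert (Hs : (0 < IZR t / 2)%R) by (apply IZR_lt in Ht; lra).
  destruct (H _ Hs) as [H1 _]. apply H1.
  pose proof (DP_emb n Hn) as He. rewrite E, DP_o in He. cbn [fst snd] in He.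
  replace (fst (glue_pos P k), (snd (glue_pos P k) + IZR t / 2)%R) with
    ((IZR (X k + X (S k) ) / 2)%R, (IZR (Y k + Y (S k) + t) / 2)%R); [exact He|].
  unfold glue_pos. rewrite !Rpos_fst, !Rpos_snd. cbn [fst snd].
  rewrite !plus_IZR. f_equal; lra.
Qed.


Lemma horiz k : (points_east P k \/ points_west P k) ->
  (X (S k) = X k + 1 \/ X (S k) = X k - 1) /\ Y (S k) = Y k.
Proof. unfold points_east, points_west, X, Y. intros [[A B]|[A B]]; split; auto. Qed.

Lemma pair_eta (p : Z*Z) a b : fst p = a -> snd p = b -> p = (a,b).
Proof. destruct p; simpl; intros; subst; reflexivity. Qed.

Lemma onray_ok sigma k n : visible_from_south sigma P k -> (k < L)%nat -> (n <= 2*L)%nat ->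
  n <> (2*k+1)%nat -> ~ onray (DP (2*k+1)) (DP n).
Proof.
  intros V Hk Hn Hne [H1 H2].
  destruct (Z.eq_dec (snd (DP n)) (snd (DP (2*k+1)))) as [E|E].
  - apply Hne. apply DP_inj; try lia. rewrite (surjective_pairing (DP (2*k+1))). apply pair_eta; auto.
  - apply (VS sigma k n (snd (DP (2*k+1)) - snd (DP n)) V Hk Hn ltac:(lia)).
    apply pair_eta; lia.
Qed.

Lemma pocket sigma s e sg : (s < e)%nat -> (e < L)%nat ->
  visible_from_south sigma P s -> visible_from_south sigma P e ->
  visible_from_north sigma P (L-1) ->
  ((sg = 1 /\ X (S e) = X e + 1 /\ fst (DP (2*s+1)) > fst (DP (2*e+1)) /\
      fst (DP (2*s+1)) <> fst (DP (2*e+1)) + 1) \/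
   (sg = -1 /\ X (S e) = X e - 1 /\ fst (DP (2*s+1)) < fst (DP (2*e+1)))) ->
  Y (S e) = Y e -> False.
Proof.
  intros Hse HeL Vs Ve Vn Hsg HYe.
  assert (HL1 : (L - 1 < L)%nat) by (unfold L; lia).
  assert (HL : (2*s+1 + 2*(e-s))%nat = (2*e+1)%nat) by lia.
  assert (U : units DP (2*s+1) (2*(e-s))) by (intros k Hk; apply DP_units; lia).
  pose proof (horiz s (proj1 Vs)) as Hs. pose proof (horiz (L-1) (proj1 Vn)) as Hl.
  replace (S (L-1)) with L in Hl by (unfold L in *; lia).
  pose proof (between DP (2*s+1) (2*(e-s)) sg U) as B. rewrite HL in B.
  assert (Ev : (fst (DP (2*e+1)) + sg, snd (DP (2*e+1))) = DP (2 * S e)).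
  { rewrite DP_o, DP_e. cbn [fst snd]. f_equal; lia. }
  rewrite Ev in B.
  assert (Bt : cntr DP (DP (2 * S e)) (2*s+1) (2*(e-s)) = true).
  { apply B.
    - intros k t Hk Ht. apply (VS sigma s); auto; lia.
    - intros k t Hk Ht. apply (VS sigma e); auto; lia.
    - destruct Hsg as [[A [C [D F]]]|[A [C D]]]; [left|right]; repeat split; auto.
    - rewrite <- Ev. intros k Hk E. rewrite Ev in E. apply DP_inj in E; lia.
    - intros k Hk E.
      destruct (VOFF (2*s+1+k) (S e) (-1) ltac:(lia) ltac:(lia) ltac:(lia)) as [k' [K1 [K2 K3]]].
      + rewrite E, DP_o. cbn [fst snd]. destruct Hsg as [[-> [C _]]|[-> [C _]]]; f_equal; lia.
      + assert (k' = e) by lia. subst k'. destruct Hsg as [[_ [C _]]|[_ [C _]]]; lia. }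
  pose proof (walk_inv DP (2*s+1) (2*(e-s)) (fun n => DP (2 * S e + n)) (2*L - 2 * S e) U) as W.
  rewrite HL in W. cbn beta in W. rewrite Nat.add_0_r in W.
  replace (2 * S e + (2 * L - 2 * S e))%nat with (2*L)%nat in W by lia.
  assert (Wt : cntr DP (DP (2*L)) (2*s+1) (2*(e-s)) = true).
  { rewrite <- W; auto.
    - intros n Hn. replace (2 * S e + S n)%nat with (S (2 * S e + n)) by lia. apply DP_units; lia.
    - intros n Hn. split; [|split].
      + intros k Hk E. apply DP_inj in E; lia.
      + apply (onray_ok sigma s); lia || auto.
      + apply (onray_ok sigma e); lia || auto. }
  rewrite DP_e in Wt.
  assert (Avq' : avoid DP (2 * X L, 2 * Y L + 1) (2*s+1) (2*(e-s))).
  { intros k Hk E.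
    destruct (VOFF (2*s+1+k) L 1 ltac:(lia) ltac:(lia) ltac:(lia) E) as [k' [K1 [K2 K3]]].
    destruct K2 as [K2|K2]. lia. assert (k' = (L-1)%nat) by lia. subst k'.
    rewrite K2 in K3. lia. }
  rewrite (cnt_v DP (2 * X L) (2 * Y L) _ _ U Avq') in Wt.
  set (G := DP (2*(L-1)+1)) in *.
  assert (HG : G = (X (L-1) + X L, Y (L-1) + Y L)).
  { unfold G. rewrite DP_o. replace (S (L-1)) with L by (unfold L in *; lia). reflexivity. }
  assert (Avq'' : avoid DP (fst G, snd G + 1) (2*s+1) (2*(e-s))).
  { intros k Hk E. apply (VN sigma (L-1) (2*s+1+k) 1 Vn HL1 ltac:(lia) ltac:(lia)). exact E. }
  assert (Rg : forall k, visible_from_south sigma P k -> (k < L)%nat -> ~ onray (DP (2*k+1)) (fst G, snd G + 1)).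
  { intros k Vk Hk [O1 O2]. cbn [fst snd] in O1, O2.
    apply (VS sigma k (2*(L-1)+1) (snd (DP (2*k+1)) - snd G) Vk Hk ltac:(lia) ltac:(lia)).
    fold G. apply pair_eta; lia. }
  assert (Rq : forall k, visible_from_south sigma P k -> (k < L)%nat -> ~ onray (DP (2*k+1)) (2 * X L, 2 * Y L + 1)).
  { intros k Vk Hk [O1 O2]. rewrite DP_o in O1. cbn [fst snd] in O1.
    pose proof (horiz k (proj1 Vk)). lia. }
  assert (Hu2 : unitZ (2 * X L, 2 * Y L + 1) (fst G, snd G + 1)).
  { rewrite HG. unfold unitZ. cbn [fst snd]. lia. }
  rewrite (step_inv DP (2*s+1) (2*(e-s)) _ _ U Hu2 Avq' Avq'') in Wt;
    try (rewrite ?HL; apply Rq || apply Rg; auto; lia).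
  rewrite cnt_none in Wt. discriminate.
  intros k Hk [C1 C2]. cbn [fst snd] in C1, C2.
  apply (VN sigma (L-1) (2*s+1+k) (snd (DP (2*s+1+k)) - snd G) Vn HL1 ltac:(lia) ltac:(lia)).
  fold G. apply pair_eta; lia.
Qed.


Lemma xne sigma s e : s <> e -> (s < L)%nat -> (e < L)%nat ->
  visible_from_south sigma P s -> visible_from_south sigma P e ->
  fst (DP (2*s+1)) <> fst (DP (2*e+1)).
Proof.
  intros Hne Hs He Vs Ve Ex.
  destruct (Z.lt_total (snd (DP (2*s+1))) (snd (DP (2*e+1)))) as [Lt|[Eq|Gt]].
  - apply (VS sigma e (2*s+1) (snd (DP (2*e+1)) - snd (DP (2*s+1))) Ve He ltac:(lia) ltac:(lia)).
    apply pair_eta; lia.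
  - apply Hne. assert (2*s+1 = 2*e+1)%nat; [|lia].
    apply DP_inj; try lia. rewrite (surjective_pairing (DP (2*e+1))). apply pair_eta; auto.
  - apply (VS sigma s (2*e+1) (snd (DP (2*s+1)) - snd (DP (2*e+1))) Vs Hs ltac:(lia) ltac:(lia)).
    apply pair_eta; lia.
Qed.

Lemma final_thm sigma i j : visible_from_north sigma P (L - 1) ->
  (i < L)%nat -> (j < L)%nat ->
  visible_from_south sigma P i -> visible_from_south sigma P j ->
  (points_east P i -> (x_at P i < x_at P j)%Z -> (i < j)%nat /\ points_east P j) /\
  (points_west P i -> (x_at P i > x_at P j)%Z -> (i < j)%nat /\ points_west P j).
Proof.
  intros Vn Hi Hj Vi Vj.
  change (x_at P i) with (X i). change (x_at P j) with (X j).
  pose proof (horiz i (proj1 Vi)) as Hoi. pose proof (horiz j (proj1 Vj)) as Hoj.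
  assert (Di := DP_o i). assert (Dj := DP_o j).
  split; intros Ei Hx; unfold points_east, points_west in Ei;
    change (x_at P (S i)) with (X (S i)) in Ei; change (x_at P i) with (X i) in Ei;
    change (y_at P (S i)) with (Y (S i)) in Ei; change (y_at P i) with (Y i) in Ei;
    (assert (Hij : i <> j) by (intros ->; lia));
    pose proof (xne sigma i j Hij Hi Hj Vi Vj) as Xn;
    rewrite Di, Dj in Xn; cbn [fst snd] in Xn.
  - destruct (lt_eq_lt_dec i j) as [[lt|eq]|gt]; [|lia|].
    + split; auto. destruct (proj1 Vj) as [Ej|Wj]; auto. exfalso.
      unfold points_west in Wj. change (x_at P (S j)) with (X (S j)) in Wj; change (x_at P j) with (X j) in Wj.
      apply (pocket sigma i j (-1)); auto; [|lia]. right. rewrite Di, Dj. cbn [fst snd]. lia.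
    + exfalso. apply (pocket sigma j i 1); auto; [|lia]. left. rewrite Di, Dj. cbn [fst snd]. lia.
  - destruct (lt_eq_lt_dec i j) as [[lt|eq]|gt]; [|lia|].
    + split; auto. destruct (proj1 Vj) as [Ej|Wj]; auto. exfalso.
      unfold points_east in Ej. change (x_at P (S j)) with (X (S j)) in Ej; change (x_at P j) with (X j) in Ej.
      apply (pocket sigma i j 1); auto; [|lia]. left. rewrite Di, Dj. cbn [fst snd]. lia.
    + exfalso. apply (pocket sigma j i (-1)); auto; [|lia]. right. rewrite Di, Dj. cbn [fst snd]. lia.
Qed.

End P.

Theorem mainTheorem2 :
  forall (T : list tiletype) (sigma : list tile) (P : list tile),
    seed_ok sigma ->
    producible_path T sigma P ->
    (2 <= length P)%nat ->
    visible_from_north sigma P (length P - 2) ->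
    forall i j : nat,
      (i <= length P - 2)%nat -> (j <= length P - 2)%nat ->
      visible_from_south sigma P i -> visible_from_south sigma P j ->
      (points_east P i -> (x_at P i < x_at P j)%Z ->
         (i < j)%nat /\ points_east P j) /\
      (points_west P i -> (x_at P i > x_at P j)%Z ->
         (i < j)%nat /\ points_west P j).
Proof.
  intros T sigma P _ [Hpath _] H2 Vn i j Hi Hj Vi Vj.
  replace (length P - 2)%nat with (L P - 1)%nat in Vn by (unfold L; lia).
  apply (final_thm P Hpath H2 sigma); auto; unfold L; lia.
Qed.
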